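(* For a weakly coupled POMDP and horizon $T$, the values of the Lagrangian relaxations (relaxing the linking constraints) of MILP (IP) and of the nonlinear program (UB) are equal; denoting this common value by $z_{\mathrm{LR}}$, $$z_{\mathrm{UB}}\le z_{\mathrm{LR}}\le z_{\mathrm R^{\mathrm c}}\le z_{\mathrm R}.$$
   Context: Weakly coupled POMDP: components $m\in[M]$, each a POMDP $(\mathcal X_S^m,\mathcal X_O^m,\mathcal X_A^m,\mathfrak p^m,\mathbf r^m)$ (initial $p^m(s)$, emissions $p^m(o|s)$, transitions $p^m(s'|s,a)$, reward $r^m$), $\mathbf D^m:\mathcal X_A^m\to\mathbb R^q$, $\mathbf b\in\mathbb R^q_{\ge0}$; full action space $\mathcal X_A=\{\mathbf a\in\prod_m\mathcal X_A^m:\sum_m\mathbf D^m(a^m)\le\mathbf b\}$ nonempty. For a POMDP, $\mathcal Q(T,\mathcal X_S,\mathcal X_O,\mathcal X_A,\mathfrak p)$: pairs $(\tau,\delta)$, $\delta^t_{a|o}\ge0$, $\sum_a\delta^t_{a|o}=1$, nonnegative $\tau$ with (i) $\tau^1_s=p(s)$; (ii) $\sum_{o,a}\tau^t_{soa}=\nu^t_s$, $\nu^1_s=\tau^1_s$, $\nu^t_s=\sum_{s'',a''}\tau^{t-1}_{s''a''s}$; (iii) $\sum_{\bar s}\tau^t_{sa\bar s}=\sum_o\tau^t_{soa}$; (iv) $\tau^t_{sas'}=p(s'|s,a)\sum_{\bar s}\tau^t_{sa\bar s}$; (v) $\tau^t_{soa}=\delta^t_{a|o}p(o|s)\sum_{o',a'}\tau^t_{so'a'}$.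 $\mathcal Q^{\mathrm d}$: same but $\delta^t_{a|o}\in\{0,1\}$ and (v) replaced by $\tau^t_{soa}\le p(o|s)\nu^t_s$, $\tau^t_{soa}\le\delta^t_{a|o}$, $\tau^t_{soa}\ge p(o|s)\nu^t_s+\delta^t_{a|o}-1$. (IP): maximize $\sum_t\sum_m\sum_{s,a,s'}r^m(s,a,s')\tau^{t,m}_{sas'}$ s.t. $(\tau^m,\delta^m)\in\mathcal Q^{\mathrm d}(T,\mathcal X_S^m,\mathcal X_O^m,\mathcal X_A^m,\mathfrak p^m)$, $\tau^{t,m}_a=\sum_{s,o}\tau^{t,m}_{soa}$, and linking constraints $\sum_m\sum_a\mathbf D^m(a)\tau^{t,m}_a\le\mathbf b$ ($t\in[T]$). (UB): same with $\mathcal Q$ in place of $\mathcal Q^{\mathrm d}$; value $z_{\mathrm{UB}}$. The Lagrangian relaxation of (IP) (resp. (UB)) is $\min_{\beta\in\mathbb R_+^{T\times q}}$ of the maximum, over the constraints other than the linking constraints, of $\sum_t\sum_m\sum_{s,a,s'}r^m(s,a,s')\tau^{t,m}_{sas'}+\sum_t(\beta^t)^\top(\mathbf b-\sum_m\sum_a\mathbf D^m(a)\tau^{t,m}_a)$. $z_{\mathrm R}$: value of the linear relaxation of (IP) ($\delta^{t,m}_{a|o}\in[0,1]$). $z_{\mathrm R^{\mathrm c}}$: value of that linear relaxation with, for each $m$ and $t\ge2$, additional nonnegative variables $\tau^{t,m}_{s'a'soa}$ and constraints $\sum_{s',a'}\tau^{t,m}_{s'a'soa}=\tau^{t,m}_{soa}$;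 $\sum_a\tau^{t,m}_{s'a'soa}=p^m(o|s)p^m(s|s',a')\sum_{\bar s}\tau^{t-1,m}_{s'a'\bar s}$; $\tau^{t,m}_{s'a'soa}=p^m(s|s',a',o)\sum_{\bar s}\tau^{t,m}_{s'a'\bar soa}$ with $p^m(s|s',a',o)=p^m(o|s)p^m(s|s',a')/\sum_{\bar s}p^m(o|\bar s)p^m(\bar s|s',a')$. *)

(* Defs.v *)
From HB Require Import structures.
From mathcomp Require Import all_boot all_order all_algebra.
From mathcomp Require Import boolp classical_sets reals.
Set Implicit Arguments.
Unset Strict Implicit.
Unset Printing Implicit Defensive.
Import Order.TTheory GRing.Theory Num.Theory.
Local Open Scope ring_scope.
Local Open Scope classical_set_scope.

Section Defs.
Variable R : realType.

(* A finite POMDP: p_init s = p(s), p_obs s o = p(o|s),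
   p_trans s a s' = p(s'|s,a), rew s a s' = r(s,a,s'). *)
Unset Implicit Arguments.
Record pomdp := Pomdp {
  St : finType; Ob : finType; Ac : finType;
  p_init : St -> R;
  p_obs : St -> Ob -> R;
  p_trans : St -> Ac -> St -> R;
  rew : St -> Ac -> St -> R }.
Set Implicit Arguments.

Definition pomdp_wf (P : pomdp) : Prop :=
  [/\ (forall s, 0 <= p_init P s) /\ \sum_s p_init P s = 1,
      (forall s o, 0 <= p_obs P s o) /\ (forall s, \sum_o p_obs P s o = 1) &
      (forall s a s', 0 <= p_trans P s a s') /\
      (forall s a, \sum_s' p_trans P s a s' = 1)].

(* Weakly coupled POMDP: components m in 'I_ncomp, resource vectors
   D^m(a) in R^nres (as functions 'I_nres -> R), budget b. *)
Unset Implicit Arguments.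
Record wcpomdp := WCPomdp {
  ncomp : nat;
  comp : 'I_ncomp -> pomdp;
  nres : nat;
  cons : forall m : 'I_ncomp, Ac (comp m) -> 'I_nres -> R;
  budget : 'I_nres -> R }.
Set Implicit Arguments.

Definition wcpomdp_wf (W : wcpomdp) : Prop :=
  [/\ (forall m, pomdp_wf (comp W m)),
      (forall k, 0 <= budget W k) &
      (* the full action space X_A is nonempty *)
      exists a : forall m, Ac (comp W m),
        forall k, \sum_(m < ncomp W) cons W m (a m) k <= budget W k].

(* Decision variables of one component. Time is a nat; index t (0-based)
   stands for the paper's time t+1; only t < T is constrained/used. *)
Record vars (P : pomdp) := Vars {
  x_soa : nat -> St P -> Ob P -> Ac P -> R;
  x_sas : nat -> St P -> Ac P -> St P -> R;
  x_del : nat -> Ob P -> Ac P -> R }.         (* delta^t_{a|o} *)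

(* nu^t_s, with nu^1_s = tau^1_s = p(s) (constraint (i) substituted). *)
Definition nu (P : pomdp) (x : vars P) (t : nat) (s : St P) : R :=
  if t is k.+1 then \sum_(s'' : St P) \sum_(a'' : Ac P) x_sas x k s'' a'' s
  else p_init P s.

(* constraints (i)-(iv), nonnegativity of tau, and sum_a delta = 1 *)
Definition base_feas (P : pomdp) (T : nat) (x : vars P) : Prop :=
  forall t, (t < T)%N ->
  [/\ (forall s o a, 0 <= x_soa x t s o a) /\
      (forall s a s', 0 <= x_sas x t s a s'),
      (forall o, \sum_a x_del x t o a = 1),
      (forall s, \sum_o \sum_a x_soa x t s o a = nu x t s),
      (forall s a, \sum_s' x_sas x t s a s' = \sum_o x_soa x t s o a) &
      (forall s a s', x_sas x t s a s' = p_trans P s a s' * \sum_sb x_sas x t s a sb)].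

Definition Q_feas (P : pomdp) (T : nat) (x : vars P) : Prop :=
  base_feas T x /\
  forall t, (t < T)%N ->
    (forall o a, 0 <= x_del x t o a) /\
    (forall s o a, x_soa x t s o a =
       x_del x t o a * p_obs P s o * \sum_o' \sum_a' x_soa x t s o' a').

Definition mccormick (P : pomdp) (T : nat) (x : vars P) : Prop :=
  forall t, (t < T)%N -> forall s o a,
    [/\ x_soa x t s o a <= p_obs P s o * nu x t s,
        x_soa x t s o a <= x_del x t o a &
        p_obs P s o * nu x t s + x_del x t o a - 1 <= x_soa x t s o a].

Definition Qd_feas (P : pomdp) (T : nat) (x : vars P) : Prop :=
  [/\ base_feas T x,
      (forall t, (t < T)%N -> forall o a, x_del x t o a = 0 \/ x_del x t o a = 1) &
      mccormick T x].

Definition QR_feas (P : pomdp) (T : nat) (x : vars P) : Prop :=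
  [/\ base_feas T x,
      (forall t, (t < T)%N -> forall o a, 0 <= x_del x t o a <= 1) &
      mccormick T x].

Definition pcond (P : pomdp) (s' : St P) (a' : Ac P) (o : Ob P) (s : St P) : R :=
  p_obs P s o * p_trans P s' a' s /
  \sum_(sb : St P) p_obs P sb o * p_trans P s' a' sb.

(* additional variables/constraints of R^c, for paper-times t >= 2
   (0-based 1 <= t < T); xi t s' a' s o a = tau^t_{s'a'soa}. *)
Definition Rc_extra (P : pomdp) (T : nat) (x : vars P)
    (xi : nat -> St P -> Ac P -> St P -> Ob P -> Ac P -> R) : Prop :=
  forall t, (0 < t)%N -> (t < T)%N ->
  [/\ (forall s' a' s o a, 0 <= xi t s' a' s o a),
      (forall s o a, \sum_s' \sum_a' xi t s' a' s o a = x_soa x t s o a),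
      (forall s' a' s o, \sum_a xi t s' a' s o a =
          p_obs P s o * p_trans P s' a' s * \sum_sb x_sas x t.-1 s' a' sb) &
      (forall s' a' s o a, xi t s' a' s o a =
          pcond s' a' o s * \sum_sb xi t s' a' sb o a)].

Definition Rc_feas (P : pomdp) (T : nat) (x : vars P) : Prop :=
  QR_feas T x /\ exists xi, Rc_extra T x xi.

Section Programs.
Variable W : wcpomdp.
Variable T : nat.

Definition jvars := forall m : 'I_(ncomp W), vars (comp W m).

Definition objective (X : jvars) : R :=
  \sum_(t < T) \sum_(m < ncomp W) \sum_(s : St (comp W m)) \sum_(a : Ac (comp W m))
    \sum_(s' : St (comp W m)) rew (comp W m) s a s' * x_sas (X m) t s a s'.

Definition usage (X : jvars) (t : nat) (k : 'I_(nres W)) : R :=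
  \sum_(m < ncomp W) \sum_(a : Ac (comp W m))
    cons W m a k * (\sum_(s : St (comp W m)) \sum_(o : Ob (comp W m)) x_soa (X m) t s o a).

Definition linking (X : jvars) : Prop :=
  forall t, (t < T)%N -> forall k, usage X t k <= budget W k.

Definition comp_feas (F : forall P : pomdp, nat -> vars P -> Prop) (X : jvars) : Prop :=
  forall m, F (comp W m) T (X m).

Definition prog_value (F : forall P : pomdp, nat -> vars P -> Prop) : R :=
  sup [set v | exists X : jvars, [/\ comp_feas F X, linking X & v = objective X]].

Definition lagrangian (F : forall P : pomdp, nat -> vars P -> Prop)
    (beta : nat -> 'I_(nres W) -> R) : R :=
  sup [set v | exists X : jvars, comp_feas F X /\
        v = objective X + \sum_(t < T) \sum_(k < nres W)
                            beta t k * (budget W k - usage X t k)].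

Definition lagrangian_value (F : forall P : pomdp, nat -> vars P -> Prop) : R :=
  inf [set v | exists beta : nat -> 'I_(nres W) -> R,
                 (forall t k, 0 <= beta t k) /\ v = lagrangian F beta].

Definition z_UB := prog_value Q_feas.
Definition z_R := prog_value QR_feas.
Definition z_Rc := prog_value Rc_feas.
Definition z_LR_IP := lagrangian_value Qd_feas.
Definition z_LR_UB := lagrangian_value Q_feas.

End Programs.
End Defs.

(* Main.v *)
Require Import Defs.
From HB Require Import structures.
From mathcomp Require Import all_boot all_order all_algebra.
From mathcomp Require Import boolp classical_sets reals.
From mathcomp Require Import ring lra.
Import Order.TTheory GRing.Theory Num.Theory.
Local Open Scope ring_scope.
Section Pomdp.
Variable R : realType.
Variable P : pomdp R.
Hypothesis wf : pomdp_wf P.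

Lemma wf_init_ge0 s : 0 <= p_init R P s. Proof. by case: wf => [[]]. Qed.
Lemma wf_init_sum : \sum_s p_init R P s = 1. Proof. by case: wf => [[]]. Qed.
Lemma wf_obs_ge0 s o : 0 <= p_obs R P s o. Proof. by case: wf => _ [] . Qed.
Lemma wf_obs_sum s : \sum_o p_obs R P s o = 1. Proof. by case: wf => _ []. Qed.
Lemma wf_tr_ge0 s a s' : 0 <= p_trans R P s a s'. Proof. by case: wf => _ _ []. Qed.
Lemma wf_tr_sum s a : \sum_s' p_trans R P s a s' = 1. Proof. by case: wf => _ _ []. Qed.

Lemma le_sum_term {I : finType} {F : I -> R} j :
  (forall i, 0 <= F i) -> F j <= \sum_i F i.
Proof.
by move=> H; rewrite (bigD1 j) //= lerDl sumr_ge0.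
Qed.

Section Base.
Variable T : nat.
Variable x : vars P.
Hypothesis hb : base_feas T x.

Lemma bf_soa_ge0 t s o a : (t < T)%N -> 0 <= x_soa x t s o a.
Proof. by move=> /hb [[H _] _ _ _ _]. Qed.
Lemma bf_sas_ge0 t s a s' : (t < T)%N -> 0 <= x_sas x t s a s'.
Proof. by move=> /hb [[_ H] _ _ _ _]. Qed.

Lemma bf_nu_ge0 t s : (t < T)%N -> 0 <= nu x t s.
Proof.
case: t => [|t] ht /=; first exact: wf_init_ge0.
apply: sumr_ge0 => s'' _; apply: sumr_ge0 => a'' _; apply: bf_sas_ge0.
exact: ltnW.
Qed.

Lemma bf_nu_sum t : (t < T)%N -> \sum_s nu x t s = 1.
Proof.
elim: t => [|t IH] ht /=; first exact: wf_init_sum.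
have ht' : (t < T)%N by exact: ltnW.
have [_ _ H2 H3 _] := hb _ ht'.
rewrite exchange_big /= -(IH ht'); apply: eq_bigr; move=> s1 _.
have E : \sum_o \sum_a x_soa x t s1 o a = \sum_a \sum_o x_soa x t s1 o a.
  exact: exchange_big.
rewrite -H2 E exchange_big /=.
by apply: eq_bigr => a1 _; rewrite H3.
Qed.

Lemma bf_nu_le1 t s : (t < T)%N -> nu x t s <= 1.
Proof.
move=> ht; rewrite -(bf_nu_sum t ht); apply: (le_sum_term (F := nu x t)).
by move=> i; exact: bf_nu_ge0.
Qed.

Lemma bf_soa_le_nu t s o a : (t < T)%N -> x_soa x t s o a <= nu x t s.
Proof.
move=> ht; have [_ _ H2 _ _] := hb _ ht; rewrite -H2.
apply: le_trans (le_sum_term (F := fun o => \sum_a x_soa x t s o a) o _).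
  apply: le_sum_term => a'; exact: bf_soa_ge0.
by move=> o'; apply: sumr_ge0 => a' _; exact: bf_soa_ge0.
Qed.

Lemma bf_soa_le1 t s o a : (t < T)%N -> x_soa x t s o a <= 1.
Proof. by move=> ht; apply: le_trans (bf_soa_le_nu t s o a ht) (bf_nu_le1 t s ht). Qed.

Lemma bf_sas_le1 t s a s' : (t < T)%N -> x_sas x t s a s' <= 1.
Proof.
move=> ht; have [_ _ H2 H3 _] := hb _ ht.
have H4 : x_sas x t s a s' <= \sum_s'' x_sas x t s a s''.
  by apply: (le_sum_term (F := fun s'' => x_sas x t s a s'')) => i; exact: bf_sas_ge0.
apply: le_trans H4 _; rewrite H3; apply: le_trans (bf_nu_le1 t s ht).
rewrite -H2 exchange_big /=.
apply: (le_sum_term (F := fun a => \sum_o x_soa x t s o a)) => i.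
by apply: sumr_ge0 => o _; exact: bf_soa_ge0.
Qed.

End Base.

Fixpoint fnu (d : nat -> Ob R P -> Ac R P -> R) (t : nat) (s : St R P) {struct t} : R :=
  match t with
  | 0 => p_init R P s
  | t'.+1 => \sum_s'' \sum_a'' p_trans R P s'' a'' s *
               \sum_o (d t' o a'' * p_obs R P s'' o * fnu d t' s'')
  end.
Definition fsoa d t s o a := d t o a * p_obs R P s o * fnu d t s.
Definition fsas d t s a s' := p_trans R P s a s' * \sum_o fsoa d t s o a.
Definition flowv d : vars P := Vars (fsoa d) (fsas d) d.

Lemma nu_flow d t s : nu (flowv d) t s = fnu d t s.
Proof. by case: t. Qed.

Definition stoch (T : nat) (d : nat -> Ob R P -> Ac R P -> R) :=
  forall t, (t < T)%N -> (forall o a, 0 <= d t o a) /\ (forall o, \sum_a d t o a = 1).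

Section Flow.
Variable T : nat.
Variable d : nat -> Ob R P -> Ac R P -> R.
Hypothesis hd : stoch T d.

Lemma d_ge0 t o a : (t < T)%N -> 0 <= d t o a.
Proof. by move=> /hd [H _]. Qed.
Lemma d_sum t o : (t < T)%N -> \sum_a d t o a = 1.
Proof. by move=> /hd [_ H]. Qed.
Lemma d_le1 t o a : (t < T)%N -> d t o a <= 1.
Proof.
move=> ht; rewrite -(d_sum t o ht); apply: (le_sum_term (F := d t o)) => i.
exact: d_ge0.
Qed.

Lemma fnu_ge0 t s : (t < T)%N -> 0 <= fnu d t s.
Proof.
elim: t s => [|t IH] s ht /=; first exact: wf_init_ge0.
have ht' : (t < T)%N by exact: ltnW.
apply: sumr_ge0 => s1 _; apply: sumr_ge0 => a1 _; apply: mulr_ge0.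
  exact: wf_tr_ge0.
apply: sumr_ge0 => o _; apply: mulr_ge0; last exact: IH.
by apply: mulr_ge0; [exact: d_ge0 | exact: wf_obs_ge0].
Qed.

Lemma fsoa_sum t s : (t < T)%N -> \sum_o \sum_a fsoa d t s o a = fnu d t s.
Proof.
move=> ht; rewrite /fsoa.
transitivity (\sum_o p_obs R P s o * fnu d t s).
  apply: eq_bigr => o _.
  under eq_bigr do rewrite -mulrA.
  by rewrite -mulr_suml d_sum // mul1r.
by rewrite -mulr_suml wf_obs_sum mul1r.
Qed.

Lemma fsas_sum t s a : \sum_s' fsas d t s a s' = \sum_o fsoa d t s o a.
Proof. by rewrite /fsas -mulr_suml wf_tr_sum mul1r. Qed.

Lemma fnu_sum t : (t < T)%N -> \sum_s fnu d t s = 1.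
Proof.
elim: t => [|t IH] ht /=; first exact: wf_init_sum.
have ht' : (t < T)%N by exact: ltnW.
rewrite exchange_big /= -(IH ht'); apply: eq_bigr; move=> s1 _.
have E : \sum_o \sum_a fsoa d t s1 o a = \sum_a \sum_o fsoa d t s1 o a.
  exact: exchange_big.
transitivity (\sum_a \sum_o fsoa d t s1 o a); last by rewrite -E fsoa_sum.
rewrite exchange_big /=; apply: eq_bigr; move=> a1 _.
by rewrite -mulr_suml wf_tr_sum mul1r.
Qed.

Lemma fnu_le1 t s : (t < T)%N -> fnu d t s <= 1.
Proof.
move=> ht; rewrite -(fnu_sum t ht); apply: (le_sum_term (F := fnu d t)) => i.
exact: fnu_ge0.
Qed.

Lemma flow_base : base_feas T (flowv d).
Proof.
move=> t ht; split => /=.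
- split=> *; rewrite /fsoa /fsas.
    apply: mulr_ge0; last exact: fnu_ge0.
    by apply: mulr_ge0; [exact: d_ge0 | exact: wf_obs_ge0].
  apply: mulr_ge0; first exact: wf_tr_ge0.
  apply: sumr_ge0 => o _; apply: mulr_ge0; last exact: fnu_ge0.
  by apply: mulr_ge0; [exact: d_ge0 | exact: wf_obs_ge0].
- by move=> o; exact: d_sum.
- by move=> s; rewrite nu_flow fsoa_sum.
- by move=> s a; rewrite fsas_sum.
- by move=> s a s'; rewrite fsas_sum.
Qed.

Lemma flow_Q : Q_feas T (flowv d).
Proof.
split; first exact: flow_base.
move=> t ht; split => /=; first by move=> o a; exact: d_ge0.
by move=> s o a; rewrite fsoa_sum // /fsoa.
Qed.

Lemma flow_mcc : mccormick T (flowv d).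
Proof.
move=> t ht s o a; rewrite /= nu_flow /fsoa.
have h0 := d_ge0 t o a ht; have h1 := d_le1 t o a ht.
have p0 := wf_obs_ge0 s o; have n0 := fnu_ge0 t s ht; have n1 := fnu_le1 t s ht.
have p1 : p_obs R P s o <= 1.
  rewrite -(wf_obs_sum s); apply: (le_sum_term (F := p_obs R P s)) => i.
  exact: wf_obs_ge0.
have q0 : 0 <= p_obs R P s o * fnu d t s by exact: mulr_ge0.
have q1 : p_obs R P s o * fnu d t s <= 1.
  by rewrite -(mulr1 1); apply: ler_pM.
rewrite -mulrA; move: q0 q1; set q := p_obs R P s o * fnu d t s => q0 q1.
by split; nra.
Qed.

End Flow.

Lemma flow_Qd T d : stoch T d ->
  (forall t o a, (t < T)%N -> d t o a = 0 \/ d t o a = 1) -> Qd_feas T (flowv d).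
Proof.
move=> hd hb; split; [exact: flow_base | | exact: flow_mcc].
by move=> t ht o a; exact: hb.
Qed.


Lemma sum_mul_swap (I J : finType) (w : I -> R) (F : I -> J -> R) :
  \sum_i w i * \sum_j F i j = \sum_j \sum_i w i * F i j.
Proof. by under eq_bigr do rewrite mulr_sumr; exact: exchange_big. Qed.

Lemma sum_mulCA (I : finType) (w F : I -> R) c :
  \sum_i w i * (c * F i) = c * \sum_i w i * F i.
Proof. by rewrite mulr_sumr; apply: eq_bigr => i _; rewrite mulrCA. Qed.

Section Det.
Variable T : nat.
Variable x : vars P.
Hypothesis hq : Q_feas T x.

Lemma Q_base : base_feas T x. Proof. by case: hq. Qed.

Lemma Q_soa t s o a : (t < T)%N ->
  x_soa x t s o a = x_del x t o a * p_obs R P s o * nu x t s.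
Proof.
move=> ht; case: hq => hb /(_ t ht) [_ ->].
by have [_ _ -> _ _] := hb t ht.
Qed.

Lemma Q_sas t s a s' : (t < T)%N ->
  x_sas x t s a s' = p_trans R P s a s' * \sum_o x_soa x t s o a.
Proof.
move=> ht; have [_ _ _ H3 H4] := Q_base t ht.
by rewrite H4 H3.
Qed.

Lemma Q_nu t s : (t < T)%N -> nu x t s = fnu (x_del x) t s.
Proof.
elim: t s => [|t IH] s ht //=.
have ht' : (t < T)%N by exact: ltnW.
apply: eq_bigr => s1 _; apply: eq_bigr => a1 _.
rewrite Q_sas //; congr (_ * _); apply: eq_bigr => o _.
by rewrite Q_soa // IH.
Qed.

Lemma Q_soa_flow t s o a : (t < T)%N -> x_soa x t s o a = fsoa (x_del x) t s o a.
Proof. by move=> ht; rewrite Q_soa // Q_nu. Qed.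

Lemma Q_sas_flow t s a s' : (t < T)%N -> x_sas x t s a s' = fsas (x_del x) t s a s'.
Proof.
move=> ht; rewrite Q_sas //; congr (_ * _); apply: eq_bigr => o _.
exact: Q_soa_flow.
Qed.
End Det.

Definition upd (d : nat -> Ob R P -> Ac R P -> R) (t : nat) (o : Ob R P) (a : Ac R P) :=
  fun t' o' a' => if (t' == t) && (o' == o) then (a' == a)%:R else d t' o' a'.

Lemma fnu_dep d1 d2 t : (forall t', (t' < t)%N -> d1 t' = d2 t') ->
  forall s, fnu d1 t s = fnu d2 t s.
Proof.
elim: t => [|t IH] H s //=.
have IH' := IH (fun t' ht' => H t' (ltnW ht')).
apply: eq_bigr => s1 _; apply: eq_bigr => a1 _; congr (_ * _).
apply: eq_bigr => o _; by rewrite IH' H.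
Qed.

Section Dec.
Variable d : nat -> Ob R P -> Ac R P -> R.
Variable t : nat.
Variable o : Ob R P.
Hypothesis hw : \sum_a d t o a = 1.

Lemma upd_key t' o' a' : \sum_a d t o a * upd d t o a t' o' a' = d t' o' a'.
Proof.
rewrite /upd; case E: ((t' == t) && (o' == o)).
  move/andP: E => [/eqP -> /eqP ->].
  rewrite (bigD1 a') //= eqxx mulr1 big1 ?addr0 // => a /negPf.
  by rewrite eq_sym => ->; rewrite mulr0.
by rewrite -mulr_suml hw mul1r.
Qed.

Lemma fnu_dec_aux t' o' a' s : 
  (forall s, \sum_a d t o a * fnu (upd d t o a) t' s = fnu d t' s) ->
  \sum_a d t o a * (upd d t o a t' o' a' * fnu (upd d t o a) t' s) =
  d t' o' a' * fnu d t' s.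
Proof.
move=> IH; case: (leqP t' t) => ht.
  have E : forall a, fnu (upd d t o a) t' s = fnu d t' s.
    move=> a; apply: fnu_dep => t'' ht''; apply: funext => o1; apply: funext => a1.
    by rewrite /upd (_ : (t'' == t) = false) // ltn_eqF // (leq_trans ht'').
  under eq_bigr do rewrite E mulrA.
  by rewrite -mulr_suml upd_key.
have E2 : forall a, upd d t o a t' o' a' = d t' o' a'.
  by move=> a; rewrite /upd gtn_eqF.
under eq_bigr do rewrite E2 mulrCA.
by rewrite -mulr_sumr IH.
Qed.

Lemma fnu_dec t' s : \sum_a d t o a * fnu (upd d t o a) t' s = fnu d t' s.
Proof.
elim: t' s => [|t' IH] s /=; first by rewrite -mulr_suml hw mul1r.
rewrite sum_mul_swap; apply: eq_bigr => s1 _.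
rewrite sum_mul_swap; apply: eq_bigr => a1 _.
rewrite sum_mulCA; congr (_ * _).
rewrite sum_mul_swap; apply: eq_bigr => o1 _.
transitivity (\sum_a d t o a * (p_obs R P s1 o1 *
   (upd d t o a t' o1 a1 * fnu (upd d t o a) t' s1))).
  by apply: eq_bigr => a _; ring.
rewrite sum_mulCA fnu_dec_aux //.
by rewrite mulrCA mulrA.
Qed.

Lemma fsoa_dec t' s o' a' :
  \sum_a d t o a * fsoa (upd d t o a) t' s o' a' = fsoa d t' s o' a'.
Proof.
rewrite /fsoa.
transitivity (\sum_a d t o a * (p_obs R P s o' *
   (upd d t o a t' o' a' * fnu (upd d t o a) t' s))).
  by apply: eq_bigr => a _; ring.
rewrite sum_mulCA fnu_dec_aux; last exact: fnu_dec.
by rewrite mulrCA mulrA.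
Qed.

Lemma fsas_dec t' s a' s' :
  \sum_a d t o a * fsas (upd d t o a) t' s a' s' = fsas d t' s a' s'.
Proof.
rewrite /fsas sum_mulCA sum_mul_swap; congr (_ * _); apply: eq_bigr => o1 _.
exact: fsoa_dec.
Qed.
End Dec.

End Pomdp.

Arguments le_sum_term {R I F}.
Arguments bf_soa_ge0 {R P T x}. Arguments bf_sas_ge0 {R P T x}.
Arguments bf_nu_ge0 {R P} wf {T x}. Arguments bf_nu_sum {R P} wf {T x}.
Arguments bf_nu_le1 {R P} wf {T x}. Arguments bf_soa_le_nu {R P T x}.
Arguments bf_soa_le1 {R P} wf {T x}. Arguments bf_sas_le1 {R P} wf {T x}.
Arguments fnu {R P}. Arguments fsoa {R P}. Arguments fsas {R P}. Arguments flowv {R P}.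
Arguments nu_flow {R P}. Arguments stoch {R P}.
Arguments flow_base {R P} wf {T d}. Arguments flow_Q {R P} wf {T d}.
Arguments flow_Qd {R P} wf {T d}. Arguments fnu_sum {R P} wf {T d}.
Arguments fnu_ge0 {R P} wf {T d}.
Arguments sum_mul_swap {R I J}. Arguments sum_mulCA {R I}.
Arguments Q_base {R P T x}. Arguments Q_soa {R P T x}. Arguments Q_sas {R P T x}.
Arguments Q_nu {R P T x}. Arguments Q_soa_flow {R P T x}. Arguments Q_sas_flow {R P T x}.
Arguments upd {R P}. Arguments fnu_dep {R P}.
Arguments upd_key {R P d t o}. Arguments fnu_dec {R P d t o}.
Arguments fsoa_dec {R P d t o}. Arguments fsas_dec {R P d t o}.
Arguments wf_init_ge0 {R P}. Arguments wf_init_sum {R P}. Arguments wf_obs_ge0 {R P}. Arguments wf_obs_sum {R P}. Arguments wf_tr_ge0 {R P}. Arguments wf_tr_sum {R P}.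

Section Pomdp2.
Variable R : realType.
Variable P : pomdp R.
Hypothesis wf : pomdp_wf P.

Lemma upd_stoch T (d : nat -> Ob R P -> Ac R P -> R) t o a : stoch T d -> stoch T (upd d t o a).
Proof.
move=> hd t' ht'; have [h0 h1] := hd t' ht'; split.
  move=> o' a'; rewrite /upd; case: ifP => _ //; exact: ler0n.
move=> o'; rewrite /upd; case E: ((t' == t) && (o' == o)); last exact: h1.
rewrite (bigD1 a) //= eqxx big1 ?addr0 // => a' /negPf -> //.
Qed.

Lemma Qd_Q T (x : vars P) : Qd_feas T x -> Q_feas T x.
Proof.
move=> [hb hbin hm]; split => // t ht; split.
  by move=> o a; case: (hbin t ht o a) => ->.
move=> s o a; have [_ _ H2 _ _] := hb t ht; rewrite H2.
have [m1 m2 m3] := hm t ht s o a; have := bf_soa_ge0 hb t s o a ht.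
move: m1 m2 m3; set q := p_obs R P s o * nu x t s.
by case: (hbin t ht o a) => -> m1 m2 m3 m0; rewrite ?mul0r ?mul1r -/q; lra.
Qed.

Lemma Qd_Rc T (x : vars P) : Qd_feas T x -> Rc_feas T x.
Proof.
move=> hd; have hq := Qd_Q _ _ hd; case: hd => hb hbin hm.
split.
  split => // t ht o a; by case: (hbin t ht o a) => ->; rewrite ?lexx ?ler01.
exists (fun t s' a' s o a => x_del x t o a * p_obs R P s o *
   (p_trans R P s' a' s * \sum_sb x_sas x t.-1 s' a' sb)).
case=> [//|t] _ ht /=; have ht' : (t < T)%N by exact: ltnW.
split.
- move=> s' a' s o a; apply: mulr_ge0; first apply: mulr_ge0.
  + by case: (hbin _ ht o a) => ->.
  + exact: (wf_obs_ge0 wf).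
  apply: mulr_ge0; first exact: (wf_tr_ge0 wf).
  by apply: sumr_ge0 => sb _; exact: (bf_sas_ge0 hb).
- move=> s o a; rewrite (Q_soa hq) //= mulr_sumr; apply: eq_bigr => s1 _.
  rewrite mulr_sumr; apply: eq_bigr => a1 _; congr (_ * _).
  by have [_ _ _ _ H4] := hb t ht'; rewrite [RHS]H4.
- move=> s' a' s o; rewrite -!mulr_suml.
  have [_ H1 _ _ _] := Q_base hq _ ht; rewrite H1 mul1r; ring.
- move=> s' a' s o a; rewrite /pcond.
  set K := \sum_sb x_sas x t s' a' sb.
  set D := \sum_sb p_obs R P sb o * p_trans R P s' a' sb.
  have -> : \sum_sb x_del x t.+1 o a * p_obs R P sb o * (p_trans R P s' a' sb * K)
      = x_del x t.+1 o a * K * D.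
    rewrite /D mulr_sumr; apply: eq_bigr => sb _; ring.
  have [D0|Dn0] := eqVneq D 0.
    have : p_obs R P s o * p_trans R P s' a' s = 0.
      apply/eqP; rewrite eq_le; apply/andP; split; last first.
        by apply: mulr_ge0; [exact: (wf_obs_ge0 wf) | exact: (wf_tr_ge0 wf)].
      rewrite -D0 /D; apply: (le_sum_term (F := fun sb => p_obs R P sb o * p_trans R P s' a' sb)).
      by move=> i; apply: mulr_ge0; [exact: (wf_obs_ge0 wf) | exact: (wf_tr_ge0 wf)].
    move=> E; rewrite D0 !mulr0.
    transitivity (x_del x t.+1 o a * K * (p_obs R P s o * p_trans R P s' a' s)).
      ring.
    by rewrite E mulr0.
  by field.
Qed.

End Pomdp2.
Arguments upd_stoch {R P T d} t o a. Arguments Qd_Q {R P T x}. Arguments Qd_Rc {R P} wf {T x}.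

Section Pomdp3.
Variable R : realType.
Variable P : pomdp R.
Hypothesis wf : pomdp_wf P.

Lemma sum_comb (I : finType) (F G : I -> R) mu :
  \sum_i (mu * F i + (1 - mu) * G i) = mu * \sum_i F i + (1 - mu) * \sum_i G i.
Proof. by rewrite big_split /= -!mulr_sumr. Qed.

Definition vcomb (mu : R) (x y : vars P) : vars P :=
  Vars (fun t s o a => mu * x_soa x t s o a + (1 - mu) * x_soa y t s o a)
       (fun t s a s' => mu * x_sas x t s a s' + (1 - mu) * x_sas y t s a s')
       (fun t o a => mu * x_del x t o a + (1 - mu) * x_del y t o a).

Lemma nu_vcomb mu x y t s : nu (vcomb mu x y) t s = mu * nu x t s + (1 - mu) * nu y t s.
Proof.
case: t => [|t] /=; first by ring.
under eq_bigr do rewrite sum_comb.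
by rewrite sum_comb.
Qed.

Lemma Rc_convex T mu x y : 0 <= mu <= 1 -> Rc_feas T x -> Rc_feas T y ->
  Rc_feas T (vcomb mu x y).
Proof.
move=> /andP [m0 m1] [[bx dx mx] [xi1 ex]] [[by_ dy my] [xi2 ey]].
have m1' : 0 <= 1 - mu by rewrite subr_ge0.
have pos : forall a b : R, 0 <= a -> 0 <= b -> 0 <= mu * a + (1 - mu) * b.
  by move=> a b ha hb; apply: addr_ge0; apply: mulr_ge0.
split; [split|].
- move=> t ht; have [[x0 x0'] x1 x2 x3 x4] := bx t ht.
  have [[y0 y0'] y1 y2 y3 y4] := by_ t ht; split => /=.
  + by split => *; apply: pos.
  + by move=> o; rewrite sum_comb x1 y1; ring.
  + move=> s; rewrite nu_vcomb -x2 -y2 -sum_comb; apply: eq_bigr => o _.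
    by rewrite sum_comb.
  + move=> s a; rewrite sum_comb x3 y3 -sum_comb //.
  + by move=> s a s'; rewrite sum_comb x4 y4; ring.
- move=> t ht o a; have /andP [a0 a1] := dx t ht o a; have /andP [b0 b1] := dy t ht o a.
  apply/andP; split => /=; first exact: pos.
  by nra.
- move=> t ht s o a; have [x1 x2 x3] := mx t ht s o a; have [y1 y2 y3] := my t ht s o a.
  rewrite /= nu_vcomb.
  have := ler_wpM2l m0 x1; have := ler_wpM2l m1' y1.
  have := ler_wpM2l m0 x2; have := ler_wpM2l m1' y2.
  have := ler_wpM2l m0 x3; have := ler_wpM2l m1' y3.
  by move=> *; split; lra.
exists (fun t s' a' s o a => mu * xi1 t s' a' s o a + (1 - mu) * xi2 t s' a' s o a).
move=> t t0 ht; have [e1 e2 e3 e4] := ex t t0 ht; have [f1 f2 f3 f4] := ey t t0 ht.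
split => /=.
- by move=> *; apply: pos.
- move=> s o a; rewrite -e2 -f2 -sum_comb; apply: eq_bigr => s1 _.
  by rewrite sum_comb.
- move=> s' a' s o; rewrite sum_comb e3 f3 sum_comb; ring.
- by move=> s' a' s o a; rewrite e4 f4 sum_comb; ring.
Qed.

Lemma flow_agree T (d1 d2 : nat -> Ob R P -> Ac R P -> R) :
  (forall t, (t < T)%N -> d1 t = d2 t) -> forall t, (t < T)%N ->
  (forall s o a, fsoa d1 t s o a = fsoa d2 t s o a) /\
  (forall s a s', fsas d1 t s a s' = fsas d2 t s a s').
Proof.
move=> H t ht.
have E : forall s o a, fsoa d1 t s o a = fsoa d2 t s o a.
  move=> s o a; rewrite /fsoa H // (fnu_dep d1 d2) // => t' ht'.
  by apply: H; exact: ltn_trans ht' ht.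
split => // s a s'; rewrite /fsas; congr (_ * _); apply: eq_bigr => o _; exact: E.
Qed.

End Pomdp3.
Arguments vcomb {R P}. Arguments Rc_convex {R P T}. Arguments flow_agree {R P T}.
Arguments sum_comb {R I}.

Section FM.
Variable R : realType.
Variable J : finType.
Definition pt := (R * {ffun J -> R})%type.
Definition combp (mu : R) (p q : pt) : pt :=
  (mu * p.1 + (1 - mu) * q.1, [ffun j => mu * p.2 j + (1 - mu) * q.2 j]).
Definition convexS (S : pt -> Prop) :=
  forall p q mu, S p -> S q -> 0 <= mu <= 1 -> S (combp mu p q).

Lemma bmax_ge0 (X : Type) (s : seq X) (F : X -> R) :
  0 <= \big[Num.max/0]_(x <- s) F x.
Proof.
elim: s => [|x s IH]; first by rewrite big_nil.
by rewrite big_cons le_max IH orbT.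
Qed.

Lemma bmax_ge (X : eqType) (s : seq X) (F : X -> R) x :
  x \in s -> F x <= \big[Num.max/0]_(y <- s) F y.
Proof.
elim: s => [|y s IH] //; rewrite in_cons big_cons le_max => /orP [/eqP ->|hx].
  by rewrite lexx.
by rewrite IH ?orbT.
Qed.

Lemma bmax_le (X : eqType) (s : seq X) (F : X -> R) B :
  0 <= B -> (forall x, x \in s -> F x <= B) -> \big[Num.max/0]_(y <- s) F y <= B.
Proof.
move=> hB; elim: s => [|y s IH] H; first by rewrite big_nil.
rewrite big_cons ge_max H ?mem_head // IH // => x hx.
by apply: H; rewrite in_cons hx orbT.
Qed.

Lemma fm (ks : seq J) : uniq ks -> forall (S : pt -> Prop) M, convexS S ->
  (forall p, S p -> (forall j, j \in ks -> 0 <= p.2 j) -> p.1 <= M) ->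
  forall pts : seq pt, (forall p, p \in pts -> S p) ->
  exists beta : J -> R, (forall j, 0 <= beta j) /\
    forall p, p \in pts -> p.1 + \sum_(k <- ks) beta k * p.2 k <= M.
Proof.
elim: ks => [|j ks IH] hu S M hS hM pts hpts.
  exists (fun _ => 0); split => // p hp; rewrite big_nil addr0.
  by apply: hM (hpts p hp) _ => j; rewrite in_nil.
move: hu => /andP [hj hu].
pose S' := fun p : pt => S p /\ 0 <= p.2 j.
have hS' : convexS S'.
  move=> p q mu [Sp p0] [Sq q0] /andP [m0 m1]; split; first by apply: hS => //; apply/andP.
  rewrite ffunE; apply: addr_ge0; apply: mulr_ge0 => //.
  by rewrite subr_ge0.
have hM' : forall p, S' p -> (forall j', j' \in ks -> 0 <= p.2 j') -> p.1 <= M.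
  move=> p [Sp p0] H; apply: hM => // j'; rewrite in_cons => /orP [/eqP -> //|].
  exact: H.
pose pos := [seq p : pt <- pts | 0 < p.2 j].
pose neg := [seq p : pt <- pts | p.2 j < 0].
pose nn := [seq p : pt <- pts | 0 <= p.2 j].
pose mix (p q : pt) := combp (- q.2 j / (p.2 j - q.2 j)) p q.
pose pts' := nn ++ [seq mix p q | p <- pos, q <- neg].
have hmu : forall p q : pt, 0 < p.2 j -> q.2 j < 0 ->
    0 <= - q.2 j / (p.2 j - q.2 j) <= 1.
  move=> p q hp hq; have hd : 0 < p.2 j - q.2 j by lra.
  apply/andP; split; first by apply: divr_ge0; lra.
  by rewrite ler_pdivrMr // mul1r; lra.
have hmix0 : forall p q : pt, 0 < p.2 j -> q.2 j < 0 -> (mix p q).2 j = 0.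
  move=> p q hp hq; rewrite /mix /combp /= ffunE.
  have hd : p.2 j - q.2 j != 0 by rewrite gt_eqF //; lra.
  by field.
have hpts' : forall p, p \in pts' -> S' p.
  move=> p; rewrite mem_cat => /orP [|].
    by rewrite mem_filter => /andP [h0 hp]; split => //; exact: hpts.
  move/allpairsP => [[p1 q1] [/= hp1 hq1 ->]].
  move: hp1 hq1; rewrite !mem_filter => /andP [g1 hp1] /andP [g2 hq1].
  split; last by rewrite hmix0.
  by apply: hS; [exact: hpts | exact: hpts | exact: hmu].
have [b' [hb' hle']] := IH hu S' M hS' hM' pts' hpts'.
pose h (p : pt) := p.1 + \sum_(k <- ks) b' k * p.2 k - M.
have haff : forall mu p q, h (combp mu p q) = mu * h p + (1 - mu) * h q.
  move=> mu p q; rewrite /h /combp /=.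
  under eq_bigr do rewrite ffunE mulrDr mulrCA [X in _ + X]mulrCA.
  rewrite big_split /= -!mulr_sumr; ring.
have hh : forall p, p \in pts' -> h p <= 0.
  by move=> p /hle'; rewrite /h subr_le0.
pose bK := \big[Num.max/0]_(q <- neg) (h q / - q.2 j).
exists (fun k => if k == j then bK else b' k); split.
  by move=> k; case: ifP => _ //; exact: bmax_ge0.
move=> p hp; rewrite big_cons eqxx.
rewrite (eq_big_seq (fun k => b' k * p.2 k)); last first.
  move=> k hk; case: eqP => // E; by move: hj; rewrite -E hk.
have key : h p + bK * p.2 j <= 0.
  case: (ltrgtP (p.2 j) 0) => [gn|gp|g0].
  - have hn : p \in neg by rewrite mem_filter gn.
    have := @bmax_ge _ _ (fun q : pt => h q / - q.2 j) p hn; rewrite -/bK.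
    rewrite ler_pdivrMr; last by lra.
    by rewrite mulrN; lra.
  - have hnn : p \in pts' by rewrite mem_cat mem_filter hp ltW.
    have hp0 := hh p hnn.
    have hbK : bK <= - h p / p.2 j.
      apply: bmax_le; first by apply: divr_ge0; lra.
      move=> q; rewrite mem_filter => /andP [gq hq].
      have hm : mix p q \in pts'.
        rewrite mem_cat; apply/orP; right; apply/allpairsP.
        by exists (p, q); rewrite /= !mem_filter gp gq hp hq.
      have := hh _ hm; rewrite /mix haff.
      set a := p.2 j; set b := - q.2 j.
      have ha : 0 < a by []. have hb : 0 < b by rewrite /b; lra.
      have -> : 1 - b / (a + b) = a / (a + b).
        by field; rewrite gt_eqF // addr_gt0.
      have hab : 0 < a + b by rewrite addr_gt0.
      have -> : b / (a + b) * h p + a / (a + b) * h q = (b * h p + a * h q) / (a + b).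
        by field; rewrite gt_eqF.
      rewrite ler_pdivrMr // mul0r => H.
      rewrite ler_pdivrMr // mulrAC ler_pdivlMr //.
      by nra.
    have : bK * p.2 j <= - h p / p.2 j * p.2 j by apply: ler_wpM2r => //; exact: ltW.
    by rewrite divfK ?gt_eqF //; lra.
  - have hnn : p \in pts' by rewrite mem_cat mem_filter hp g0 lexx.
    by rewrite g0 mulr0 addr0; exact: hh.
by move: key; rewrite /h; lra.
Qed.

End FM.
Arguments combp {R J}. Arguments convexS {R J}.

Section Joint.
Variable R : realType.
Variable W : wcpomdp R.
Variable T : nat.
Hypothesis hW : wcpomdp_wf W.

Local Notation C m := (Defs.comp R W m).
Local Notation nr := (nres R W).

Lemma compwf m : pomdp_wf (C m).
Proof. by case: hW. Qed.

Definition Lag (beta : nat -> 'I_nr -> R) (X : jvars W) : R :=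
  objective T X + \sum_(t < T) \sum_(k < nr) beta t k * (budget R W k - usage X t k).

Lemma lin_comb (I : finType) (w : I -> R) (Y : I -> jvars W) (Z : jvars W) :
  (forall m t s o a, (t < T)%N ->
     x_soa (Z m) t s o a = \sum_i w i * x_soa (Y i m) t s o a) ->
  (forall m t s a s', (t < T)%N ->
     x_sas (Z m) t s a s' = \sum_i w i * x_sas (Y i m) t s a s') ->
  objective T Z = \sum_i w i * objective T (Y i) /\
  (forall t k, (t < T)%N -> usage Z t k = \sum_i w i * usage (Y i) t k).
Proof.
move=> H1 H2; split.
  rewrite /objective [RHS]sum_mul_swap; apply: eq_bigr => t _.
  rewrite [RHS]sum_mul_swap; apply: eq_bigr => m _.
  rewrite [RHS]sum_mul_swap; apply: eq_bigr => s _.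
  rewrite [RHS]sum_mul_swap; apply: eq_bigr => a _.
  rewrite [RHS]sum_mul_swap; apply: eq_bigr => s' _.
  by rewrite H2 // mulr_sumr; apply: eq_bigr => i _; rewrite mulrCA.
move=> t k ht; rewrite /usage [RHS]sum_mul_swap; apply: eq_bigr => m _.
rewrite [RHS]sum_mul_swap; apply: eq_bigr => a _.
rewrite sum_mulCA; congr (_ * _).
rewrite [RHS]sum_mul_swap; apply: eq_bigr => s _.
rewrite [RHS]sum_mul_swap; apply: eq_bigr => o _.
by rewrite H1.
Qed.

Lemma Lag_comb (I : finType) (w : I -> R) (Y : I -> jvars W) (Z : jvars W) beta :
  \sum_i w i = 1 ->
  (forall m t s o a, (t < T)%N ->
     x_soa (Z m) t s o a = \sum_i w i * x_soa (Y i m) t s o a) ->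
  (forall m t s a s', (t < T)%N ->
     x_sas (Z m) t s a s' = \sum_i w i * x_sas (Y i m) t s a s') ->
  Lag beta Z = \sum_i w i * Lag beta (Y i).
Proof.
move=> hw H1 H2; have [Eo Eu] := @lin_comb I w Y Z H1 H2.
rewrite /Lag Eo; under [RHS]eq_bigr do rewrite mulrDr.
rewrite big_split /=; congr (_ + _).
rewrite [RHS]sum_mul_swap; apply: eq_bigr => t _.
rewrite [RHS]sum_mul_swap; apply: eq_bigr => k _.
rewrite sum_mulCA Eu //; congr (_ * _).
under [RHS]eq_bigr do rewrite mulrBr.
by rewrite sumrB -mulr_suml hw mul1r.
Qed.

Lemma Lag_ext (X Y : jvars W) beta :
  (forall m t s o a, (t < T)%N -> x_soa (X m) t s o a = x_soa (Y m) t s o a) ->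
  (forall m t s a s', (t < T)%N -> x_sas (X m) t s a s' = x_sas (Y m) t s a s') ->
  Lag beta X = Lag beta Y.
Proof.
move=> H1 H2.
have := @Lag_comb bool (fun b => if b then 1 else 0) (fun _ => Y) X beta.
rewrite !big_bool /= !mul1r !mul0r !addr0; apply => //.
  by move=> *; rewrite big_bool /= mul1r mul0r addr0 H1.
by move=> *; rewrite big_bool /= mul1r mul0r addr0 H2.
Qed.

Lemma objective_Lag0 X : objective T X = Lag (fun _ _ => 0) X.
Proof.
rewrite /Lag big1 ?addr0 // => t _; rewrite big1 // => k _; exact: mul0r.
Qed.

Definition Lbound (beta : nat -> 'I_nr -> R) : R :=
  \sum_(t < T) \sum_(m < ncomp R W) \sum_(s : St R (C m)) \sum_(a : Ac R (C m))
    \sum_(s' : St R (C m)) `|rew R (C m) s a s'| +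
  \sum_(t < T) \sum_(k < nr) `|beta t k| * (`|budget R W k| +
    \sum_(m < ncomp R W) \sum_(a : Ac R (C m)) `|Defs.cons R W m a k| *
       (\sum_(s : St R (C m)) \sum_(o : Ob R (C m)) 1)).

Lemma Lag_le_bound (F : forall P : pomdp R, nat -> vars P -> Prop) beta X :
  (forall m x, F (C m) T x -> base_feas T x) ->
  comp_feas T F X -> Lag beta X <= Lbound beta.
Proof.
move=> hF hX.
have hb m : base_feas T (X m) by apply: hF; exact: hX.
rewrite /Lag /Lbound; apply: lerD.
  rewrite /objective; apply: ler_sum => t _; apply: ler_sum => m _.
  apply: ler_sum => s _; apply: ler_sum => a _; apply: ler_sum => s' _.
  apply: le_trans (ler_norm _) _; rewrite normrM.
  rewrite -{2}(mulr1 `|rew _ _ _ _ _|); apply: ler_wpM2l => //.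
  rewrite ger0_norm; first exact: (bf_sas_le1 (compwf m) (hb m)).
  exact: (bf_sas_ge0 (hb m)).
apply: ler_sum => t _; apply: ler_sum => k _.
apply: le_trans (ler_norm _) _; rewrite normrM; apply: ler_wpM2l => //.
apply: le_trans (ler_normB _ _) _; apply: lerD => //.
rewrite /usage; apply: le_trans (ler_norm_sum _ _ _) _.
apply: ler_sum => m _; apply: le_trans (ler_norm_sum _ _ _) _.
apply: ler_sum => a _; rewrite normrM; apply: ler_wpM2l => //.
apply: le_trans (ler_norm_sum _ _ _) _; apply: ler_sum => s _.
apply: le_trans (ler_norm_sum _ _ _) _; apply: ler_sum => o _.
rewrite ger0_norm; first exact: (bf_soa_le1 (compwf m) (hb m)).
exact: (bf_soa_ge0 (hb m)).
Qed.

Lemma Lag_has_ub (F : forall P : pomdp R, nat -> vars P -> Prop) beta :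
  (forall m x, F (C m) T x -> base_feas T x) ->
  has_ubound [set v | exists X, comp_feas T F X /\ v = Lag beta X].
Proof.
move=> hF; exists (Lbound beta) => v [X [hX ->]]; exact: Lag_le_bound hX.
Qed.


Definition jpol := forall m : 'I_(ncomp R W), nat -> Ob R (C m) -> Ac R (C m) -> R.
Definition jflow (D : jpol) : jvars W := fun m => flowv (D m).
Definition jstoch (D : jpol) := forall m, stoch T (D m).
Definition jdet (D : jpol) :=
  forall m t o a, (t < T)%N -> D m t o a = 0 \/ D m t o a = 1.
Definition jkey := {m : 'I_(ncomp R W) & ('I_T * Ob R (C m))%type}.
Definition det_at (D : jpol) (p : jkey) :=
  forall a, D (tag p) (tagged p).1 (tagged p).2 a = 0 \/
            D (tag p) (tagged p).1 (tagged p).2 a = 1.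
Definition jupd (D : jpol) m t o a : jpol :=
  @dfwith _ (fun m => nat -> Ob R (C m) -> Ac R (C m) -> R) D m (upd (D m) t o a).

Lemma exists_max (I : finType) (v : I -> R) (i0 : I) : exists i, forall j, v j <= v i.
Proof.
case: (@arg_maxP _ _ I i0 xpredT v isT) => i _ H; exists i => j; exact: H.
Qed.

Lemma derand beta : forall (l : seq jkey) (D : jpol), jstoch D ->
  (forall p, p \notin l -> det_at D p) ->
  exists D', [/\ jstoch D', jdet D' & Lag beta (jflow D) <= Lag beta (jflow D')].
Proof.
elim => [|p l IH] D hD hdet.
  exists D; split => // m t o a ht.
  exact: (hdet (existT _ m (Ordinal ht, o))).
case: p hdet => m [t o] hdet.
have hw : \sum_a D m t o a = 1 by have [_ ->] := hD m t (ltn_ord t).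
have hw0 a : 0 <= D m t o a by have [-> _] := hD m t (ltn_ord t).
have hdec : Lag beta (jflow D) =
    \sum_a D m t o a * Lag beta (jflow (jupd D m t o a)).
  apply: Lag_comb => //.
    move=> m' t' s o' a' _ /=; case: (eqVneq m m') => [e|ne].
      subst m'; under eq_bigr do rewrite /jupd dfwith_in.
      by rewrite (fsoa_dec hw).
    under eq_bigr do rewrite /jupd (dfwith_out _ _ ne).
    by rewrite -mulr_suml hw mul1r.
  move=> m' t' s a' s' _ /=; case: (eqVneq m m') => [e|ne].
    subst m'; under eq_bigr do rewrite /jupd dfwith_in.
    by rewrite (fsas_dec hw).
  under eq_bigr do rewrite /jupd (dfwith_out _ _ ne).
  by rewrite -mulr_suml hw mul1r.
have [a0 _] : exists a0 : Ac R (C m), True.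
  case: (pickP (fun _ : Ac R (C m) => true)) => [a0 _|H]; first by exists a0.
  by move: hw; rewrite big_pred0 // => /eqP; rewrite eq_sym oner_eq0.
have [ax hmax] := @exists_max _ (fun a => Lag beta (jflow (jupd D m t o a))) a0.
have hle : Lag beta (jflow D) <= Lag beta (jflow (jupd D m t o ax)).
  rewrite hdec; apply: le_trans (_ : \sum_a D m t o a * Lag beta (jflow (jupd D m t o ax)) <= _).
    by apply: ler_sum => a _; apply: ler_wpM2l => //; exact: hmax.
  by rewrite -mulr_suml hw mul1r.
have hD' : jstoch (jupd D m t o ax).
  move=> m'; case: (eqVneq m m') => [e|ne].
    by subst m'; rewrite /jupd dfwith_in; apply: upd_stoch.
  by rewrite /jupd (dfwith_out _ _ ne).
have hdet' : forall p, p \notin l -> det_at (jupd D m t o ax) p.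
  move=> p hp; case: (eqVneq p (existT _ m (t, o))) => [->|ne].
    move=> a /=; rewrite /jupd dfwith_in /upd !eqxx /=.
    by case: eqP; [right | left].
  have : p \notin existT _ m (t, o) :: l by rewrite in_cons negb_or ne.
  move/hdet; case: p ne {hp} => m' [t' o'] ne hp a /=.
  case: (eqVneq m m') => [e|ne'].
    subst m'; rewrite /jupd dfwith_in /upd.
    case E: ((val t' == val t) && (o' == o)); last exact: hp.
    move/andP: E => [/eqP /val_inj E1 /eqP E2].
    by move: ne; rewrite E1 E2 eqxx.
  by rewrite /jupd (dfwith_out _ _ ne'); exact: hp.
have [D' [h1 h2 h3]] := IH _ hD' hdet'.
by exists D'; split => //; exact: le_trans h3.
Qed.

Lemma derand_all beta D : jstoch D ->
  exists D', [/\ jstoch D', jdet D' & Lag beta (jflow D) <= Lag beta (jflow D')].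
Proof.
move=> hD; have := @derand beta (enum (predT : {pred jkey})) D hD. apply.
by move=> p; rewrite mem_enum.
Qed.

Local Open Scope classical_set_scope.

Definition LagSet (F : forall P : pomdp R, nat -> vars P -> Prop) beta :=
  [set v : R | exists X, comp_feas T F X /\ v = Lag beta X].

Lemma lagrangianE F beta : lagrangian (W:=W) T F beta = sup (LagSet F beta).
Proof. by []. Qed.

Lemma sum_ind (I : finType) (i0 : I) : \sum_(a : I) ((a == i0)%:R : R) = 1.
Proof. by rewrite (bigD1 i0) //= eqxx big1 ?addr0 // => a /negPf ->. Qed.

Lemma exists_X0 : exists X : jvars W, comp_feas T (@Qd_feas R) X /\ linking T X.
Proof.
case: hW => _ _ [a0 ha0].
pose D0 : jpol := fun m t o a => ((a == a0 m)%:R : R).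
have hs : jstoch D0.
  move=> m t ht; split => [o a|o]; first exact: ler0n.
  exact: sum_ind.
exists (jflow D0); split.
  move=> m; apply: (flow_Qd (compwf m)) => // t o a _.
  by rewrite /D0; case: eqP; [right | left].
move=> t ht k; apply: le_trans (ha0 k); rewrite le_eqVlt; apply/orP; left.
apply/eqP; apply: eq_bigr => m _.
transitivity (\sum_a Defs.cons R W m a k * ((a == a0 m)%:R : R)).
  apply: eq_bigr => a _; congr (_ * _) => /=.
  transitivity (\sum_(s : St R (C m)) ((a == a0 m)%:R : R) * fnu (D0 m) t s).
    apply: eq_bigr => s _; rewrite /fsoa.
    rewrite -mulr_suml -mulr_sumr /D0 (wf_obs_sum (compwf m)) mulr1 //.
  by rewrite -mulr_sumr (fnu_sum (compwf m) (hs m)) // mulr1.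
rewrite (bigD1 (a0 m)) //= eqxx mulr1 big1 ?addr0 // => a /negPf ->.
exact: mulr0.
Qed.

Lemma Qfeas_base m (x : vars (C m)) : Q_feas T x -> base_feas T x.
Proof. by case. Qed.
Lemma Qdfeas_base m (x : vars (C m)) : Qd_feas T x -> base_feas T x.
Proof. by case. Qed.
Lemma Rcfeas_base m (x : vars (C m)) : Rc_feas T x -> base_feas T x.
Proof. by case=> [[]]. Qed.
Lemma QRfeas_base m (x : vars (C m)) : QR_feas T x -> base_feas T x.
Proof. by case. Qed.

Lemma sup_mono (A B : set R) : A `<=` B -> A !=set0 -> has_ubound B -> sup A <= sup B.
Proof. by move=> hAB hA hB; apply: ge_sup hA _ => x hx; apply: ub_le_sup hB _ (hAB x hx). Qed.

Lemma Q_to_flow (X : jvars W) beta : comp_feas T (@Q_feas R) X ->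
  Lag beta X = Lag beta (jflow (fun m => x_del (X m))).
Proof.
move=> hX; apply: Lag_ext => m t *.
  by rewrite (Q_soa_flow (hX m)).
by rewrite (Q_sas_flow (hX m)).
Qed.

Lemma Q_jstoch (X : jvars W) : comp_feas T (@Q_feas R) X -> jstoch (fun m => x_del (X m)).
Proof.
move=> hX m t ht; have [hb hq] := hX m; split.
  by have [H _] := hq t ht.
by have [_ H _ _ _] := hb t ht.
Qed.

Lemma lagD_eq_lagQ beta : lagrangian (W:=W) T (@Qd_feas R) beta = lagrangian (W:=W) T (@Q_feas R) beta.
Proof.
have [X0 [hX0 _]] := exists_X0.
have ubQ := @Lag_has_ub (@Q_feas R) beta Qfeas_base.
have ubD := @Lag_has_ub (@Qd_feas R) beta Qdfeas_base.
rewrite !lagrangianE; apply/eqP; rewrite eq_le; apply/andP; split.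
  apply: sup_mono => //; last by exists (Lag beta X0), X0.
  move=> v [X [hX ->]]; exists X; split => // m; exact: Qd_Q.
apply: ge_sup.
  by exists (Lag beta X0), X0; split => // m; exact: Qd_Q.
move=> v [X [hX ->]].
have [D' [h1 h2 h3]] := derand_all beta _ (Q_jstoch _ hX).
rewrite (Q_to_flow _ beta hX); apply: le_trans h3 _.
apply: ub_le_sup => //; exists (jflow D'); split => // m.
by apply: (flow_Qd (compwf m)) => // t o a ht; exact: h2.
Qed.

Lemma obj_le_Lag beta X : (forall t k, 0 <= beta t k) -> linking T X ->
  objective T X <= Lag beta X.
Proof.
move=> hb hl; rewrite /Lag lerDl; apply: sumr_ge0 => t _; apply: sumr_ge0 => k _.
by apply: mulr_ge0 => //; rewrite subr_ge0; exact: hl.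
Qed.

Lemma zUB_le_lagQ beta : (forall t k, 0 <= beta t k) -> z_UB W T <= lagrangian (W:=W) T (@Q_feas R) beta.
Proof.
move=> hb; have [X0 [hX0 hl0]] := exists_X0.
apply: ge_sup.
  by exists (objective T X0), X0; split => // m; exact: Qd_Q.
move=> v [X [hX hl ->]]; apply: le_trans (obj_le_Lag _ _ hb hl) _.
apply: ub_le_sup; first exact: (@Lag_has_ub (@Q_feas R) beta Qfeas_base).
by exists X.
Qed.

Lemma lagD_ge_obj0 :
  exists c, forall beta : nat -> 'I_nr -> R, (forall t k, 0 <= beta t k) ->
     c <= lagrangian (W:=W) T (@Qd_feas R) beta.
Proof.
have [X0 [hX0 hl0]] := exists_X0.
exists (objective T X0) => b hb; apply: le_trans (obj_le_Lag _ _ hb hl0) _.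
apply: ub_le_sup; first exact: (@Lag_has_ub (@Qd_feas R) b Qdfeas_base).
by exists X0.
Qed.

Lemma Rc_set_ub :
  has_ubound [set v | exists X : jvars W, [/\ comp_feas T (@Rc_feas R) X, linking T X & v = objective T X]].
Proof.
exists (Lbound (fun _ _ => 0)) => v [X [hX _ ->]]; rewrite objective_Lag0.
exact: (@Lag_le_bound (@Rc_feas R) _ X Rcfeas_base).
Qed.

Local Notation J := ('I_T * 'I_nr)%type.

Definition point (X : jvars W) : pt R J :=
  (objective T X, [ffun j : J => budget R W j.2 - usage X j.1 j.2]).

Definition jcomb mu (X Y : jvars W) : jvars W := fun m => vcomb mu (X m) (Y m).

Lemma point_comb mu X Y : point (jcomb mu X Y) = combp mu (point X) (point Y).
Proof.
pose w := fun b : bool => if b then mu else 1 - mu.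
pose Yb := fun b : bool => if b then X else Y.
have H1 : forall m t s o a, (t < T)%N -> x_soa (jcomb mu X Y m) t s o a =
    \sum_b w b * x_soa (Yb b m) t s o a by move=> *; rewrite big_bool.
have H2 : forall m t s a s', (t < T)%N -> x_sas (jcomb mu X Y m) t s a s' =
    \sum_b w b * x_sas (Yb b m) t s a s' by move=> *; rewrite big_bool.
have [Eo Eu] := @lin_comb bool w Yb (jcomb mu X Y) H1 H2.
rewrite /point /combp Eo big_bool /=; congr (_, _).
apply/ffunP => j; rewrite !ffunE Eu // big_bool /=; ring.
Qed.

Definition Sset (p : pt R J) := exists X, comp_feas T (@Rc_feas R) X /\ p = point X.

Lemma Sset_convex : convexS Sset.
Proof.
move=> p q mu [X [hX ->]] [Y [hY ->]] hmu; exists (jcomb mu X Y); split.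
  by move=> m; apply: Rc_convex.
by rewrite point_comb.
Qed.

Lemma Sset_bound p : Sset p ->
  (forall j, j \in enum (predT : {pred J}) -> 0 <= p.2 j) -> p.1 <= z_Rc W T.
Proof.
move=> [X [hX ->]] H.
have hl : linking T X.
  move=> t ht k; have := H (Ordinal ht, k); rewrite mem_enum ffunE /= subr_ge0.
  by apply.
apply: ub_le_sup; first exact: Rc_set_ub.
by exists X.
Qed.

Definition Pi := {dffun forall m : 'I_(ncomp R W), {ffun ('I_T * Ob R (C m)) -> Ac R (C m)}}.

Definition Dpat (pi : Pi) : jpol := fun m t o a =>
  match (insub t : option 'I_T) with
  | Some t' => ((pi m (t', o) == a)%:R : R)
  | None => 0 end.

Lemma Dpat_lt pi m t o a (ht : (t < T)%N) :
  Dpat pi m t o a = ((pi m (Ordinal ht, o) == a)%:R : R).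
Proof. by rewrite /Dpat insubT. Qed.

Lemma Dpat_feas pi : comp_feas T (@Qd_feas R) (jflow (Dpat pi)).
Proof.
move=> m; apply: (flow_Qd (compwf m)).
  move=> t ht; split => [o a|o]; first by rewrite Dpat_lt ler0n.
  under eq_bigr do rewrite Dpat_lt.
  by rewrite (bigD1 (pi m (Ordinal ht, o))) //= eqxx big1 ?addr0 // => a;
     rewrite eq_sym => /negPf ->.
by move=> t o a ht; rewrite Dpat_lt; case: eqP; [right | left].
Qed.

Lemma good_beta : exists beta : nat -> 'I_nr -> R, (forall t k, 0 <= beta t k) /\
  lagrangian (W:=W) T (@Qd_feas R) beta <= z_Rc W T.
Proof.
pose pts := [seq point (jflow (Dpat pi)) | pi <- enum (predT : {pred Pi})].
have hpts : forall p, p \in pts -> Sset p.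
  move=> p /mapP [pi _ ->]; exists (jflow (Dpat pi)); split => // m.
  by apply: (Qd_Rc (compwf m)); exact: Dpat_feas.
have [bs [hbs hfm]] := @fm R J (enum (predT : {pred J})) (enum_uniq _) Sset (z_Rc W T)
   Sset_convex Sset_bound pts hpts.
pose beta t k := match (insub t : option 'I_T) with Some t' => bs (t', k) | None => 0 end.
exists beta; split.
  by move=> t k; rewrite /beta; case: insub.
have [X0 [hX0 _]] := exists_X0.
rewrite lagrangianE; apply: ge_sup; first by exists (Lag beta X0), X0.
move=> v [X [hX ->]].
have hq : comp_feas T (@Q_feas R) X by move=> m; exact: Qd_Q.
rewrite (Q_to_flow _ beta hq).
pose D := fun m => x_del (X m).
have hex : forall m (x : ('I_T * Ob R (C m))%type), exists a, D m x.1 x.2 a == 1.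
  move=> m [t o] /=; have [hb hbin _] := hX m.
  have [_ hs _ _ _] := hb t (ltn_ord t).
  apply/existsP; apply: contraT; rewrite negb_exists => /forallP H.
  move: (hs o); rewrite big1 => [/eqP|a _]; first by rewrite eq_sym oner_eq0.
  by have := H a; rewrite /D; case: (hbin t (ltn_ord t) o a) => ->; rewrite ?eqxx.
pose pi : Pi := finfun (fun m => [ffun x => xchoose (hex m x)]).
have hDpi : forall m t, (t < T)%N -> D m t = Dpat pi m t.
  move=> m t ht; apply: funext => o; apply: funext => a.
  rewrite Dpat_lt /pi !ffunE.
  have := xchooseP (hex m (Ordinal ht, o)); set c := xchoose _ => /= /eqP hc.
  case: eqP => [<-|ne] //.
  have [hb hbin _] := hX m; have [_ hs _ _ _] := hb t ht.
  case: (hbin t ht o a) => // h1; exfalso.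
  have := hs o; rewrite (bigD1 c) //= (bigD1 a) /=; last by rewrite eq_sym; apply/eqP.
  rewrite /D in hc; rewrite hc h1 => E.
  have : 0 <= \sum_(i | (i != c) && (i != a)) x_del (X m) t o i.
    apply: sumr_ge0 => i _; have [[h0 _] _ _ _ _] := hb t ht.
    by have [->|->] := hbin t ht o i; rewrite ?ler01.
  move: E; set r := \sum_(_ | _) _; lra.
have -> : Lag beta (jflow D) = Lag beta (jflow (Dpat pi)).
  apply: Lag_ext => [m t s o a ht|m t s o a ht] /=.
    by have [-> _] := flow_agree _ _ (hDpi m) t ht.
  by have [_ ->] := flow_agree _ _ (hDpi m) t ht.
have hp : point (jflow (Dpat pi)) \in pts by apply: map_f; rewrite mem_enum.
apply: le_trans _ (hfm _ hp); rewrite le_eqVlt; apply/orP; left; apply/eqP.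
rewrite /Lag /=; congr (_ + _).
rewrite big_enum /= pair_bigA /=.
apply: eq_big => [x|[t k] _]; first by rewrite inE.
by rewrite ffunE /beta /= valK.
Qed.
End Joint.

Local Open Scope classical_set_scope.

Theorem mainTheorem7 (R : realType) (W : wcpomdp R) (T : nat) :
  wcpomdp_wf W ->
  z_LR_IP W T = z_LR_UB W T /\
  z_UB W T <= z_LR_IP W T /\
  z_LR_IP W T <= z_Rc W T /\
  z_Rc W T <= z_R W T.
Proof.
move=> hW.
have eqv : z_LR_IP W T = z_LR_UB W T.
  rewrite /z_LR_IP /z_LR_UB /lagrangian_value; congr (inf _).
  apply/seteqP; split => v [b [hb ->]]; exists b; split => //.
    by rewrite (lagD_eq_lagQ _ _ _ hW).
  by rewrite (lagD_eq_lagQ _ _ _ hW).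
split => //; split.
  rewrite eqv; apply: lb_le_inf.
    by exists (lagrangian (W:=W) T (@Q_feas R) (fun _ _ => 0)), (fun _ _ => 0).
  by move=> v [b [hb ->]]; exact: (zUB_le_lagQ _ _ _ hW).
split.
  have [beta [hbeta hle]] := good_beta R W T hW.
  apply: le_trans hle; apply: ge_inf; last by exists beta.
  have [c hc] := lagD_ge_obj0 R W T hW.
  by exists c => v [b [hb ->]]; exact: hc.
have [X0 [hX0 hl0]] := exists_X0 R W T hW.
apply: sup_mono.
- move=> v [X [hX hl ->]]; exists X; split => // m; by case: (hX m).
- by exists (objective T X0), X0; split => // m; apply: (Qd_Rc (compwf _ _ hW m)).
exists (Lbound _ W T (fun _ _ => 0)) => v [X [hX _ ->]]; rewrite objective_Lag0.
exact: (@Lag_le_bound R W T hW (@QR_feas R) _ X (@QRfeas_base R W T)).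
Qed.
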